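(* Let $n\ge1$, $N=\{1,\dots,n\}$, $A=(a_{ij})\in[0,1]^{n\times n}$, $b=(b_1,\dots,b_n)$ with $b_i>0$, assume $\check\alpha_j\le1$ for all $j\in N$, and let $\lambda\in[0,+\infty)$. If for every $p=(p_1,\dots,p_n)\in P$ the system $$\begin{cases} x_j=d_{0j}=1 & \text{for all } j\in N^*,\\ d_{(p_j-1)j}\le x_j\le d_{p_jj} & \text{for all } j\in N\setminus N^*,\\ \sum_{j\in N^*}a_{ij}+\sum_{j\in N\setminus N^*}\big[\gamma_{ij}\,x_j+(1-\gamma_{ij})\,a_{ij}\big]\ge b_i & \text{for all } i\in N,\\ \sum_{j\in N^*}a_{ij}+\sum_{j\in N\setminus N^*}\big[\gamma_{ij}\,x_j+(1-\gamma_{ij})\,a_{ij}\big]=\lambda x_i & \text{for all } i\in N\end{cases}$$ has no solution $x\in[0,1]^n$, then $V^*(A,\lambda)=\emptyset$.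
   Context: $\theta=(0,\dots,0)$. For $x\in[0,1]^n$, $(A\odot x^T)_i=\sum_{j\in N}\min\{a_{ij},x_j\}$. $V^*(A,\lambda)=\{x\in[0,1]^n: (A\odot x^T)_i\ge b_i \text{ and } (A\odot x^T)_i=\lambda x_i \text{ for all } i\in N,\ x\neq\theta\}$. $\check\alpha_j=\max\big(\{0\}\cup\{b_i-\sum_{k\in N\setminus\{j\}}a_{ik}: i\in N\}\big)$. $D_j=\{d_{0j}<\dots<d_{l_jj}\}$ is the set $\{\check\alpha_j\}\cup\{a_{ij}: i\in N,\ a_{ij}\ge\check\alpha_j\}\cup\{1\}$ listed increasingly. $N^*=\{j\in N:\check\alpha_j=1\}$; $P_j=\{0\}$ for $j\in N^*$ and $P_j=\{1,\dots,l_j\}$ (indices with $d_{pj}>\check\alpha_j$) for $j\in N\setminus N^*$; $P=P_1\times\dots\times P_n$. For $p\in P$, $i\in N$, $j\in N\setminus N^*$: $\gamma_{ij}=1$ if $d_{p_jj}\le a_{ij}$ and $\gamma_{ij}=0$ if $a_{ij}\le d_{(p_j-1)j}$. *)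

(* Defs.v *)
From HB Require Import structures.
From mathcomp Require Import all_boot all_order all_algebra.
From mathcomp Require Import reals.
Set Implicit Arguments. Unset Strict Implicit. Unset Printing Implicit Defensive.
Import Order.TTheory GRing.Theory Num.Theory.
Local Open Scope ring_scope.

Section MaxMin.
Variables (R : realType) (n : nat).
Implicit Types (A : 'M[R]_n) (b x : 'rV[R]_n) (lam : R) (p : 'I_n -> nat).

Definition maxmin A x (i : 'I_n) : R := \sum_(j < n) Num.min (A i j) (x 0 j).

Definition in_Vstar A b lam x : Prop :=
  (forall j, 0 <= x 0 j <= 1) /\
  (forall i, b 0 i <= maxmin A x i /\ maxmin A x i = lam * x 0 i) /\
  x != 0.

Definition alpha_check A b (j : 'I_n) : R :=
  \big[Num.max/0]_(i < n) (b 0 i - \sum_(k < n | k != j) A i k).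

Definition Dseq A b (j : 'I_n) : seq R :=
  sort <=%R (undup (alpha_check A b j :: 1 ::
     [seq A i j | i <- enum 'I_n & alpha_check A b j <= A i j])).

Definition dd A b (k : nat) (j : 'I_n) : R := nth 0 (Dseq A b j) k.

Definition ll A b (j : 'I_n) : nat := (size (Dseq A b j)).-1.

Definition Nstar A b (j : 'I_n) : bool := alpha_check A b j == 1.

Definition inP A b p : Prop :=
  forall j, if Nstar A b j then p j = 0%N else (1 <= p j <= ll A b j)%N.

(* gamma_ij : 1 if d_{p_j j} <= a_ij, 0 otherwise (then a_ij <= d_{(p_j-1)j}) *)
Definition gamma A b p (i j : 'I_n) : R :=
  if dd A b (p j) j <= A i j then 1 else 0.

Definition lhs A b p x (i : 'I_n) : R :=
  \sum_(j < n | Nstar A b j) A i j +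
  \sum_(j < n | ~~ Nstar A b j)
      (gamma A b p i j * x 0 j + (1 - gamma A b p i j) * A i j).

Definition solves_system A b lam p x : Prop :=
  (forall j, 0 <= x 0 j <= 1) /\
  (forall j, Nstar A b j -> x 0 j = dd A b 0 j /\ dd A b 0 j = 1) /\
  (forall j, ~~ Nstar A b j ->
       dd A b (p j).-1 j <= x 0 j <= dd A b (p j) j) /\
  (forall i, b 0 i <= lhs A b p x i) /\
  (forall i, lhs A b p x i = lam * x 0 i).

End MaxMin.

(* Main.v *)
Require Import Defs.
From HB Require Import structures.
From mathcomp Require Import all_boot all_order all_algebra.
From mathcomp Require Import reals.
Import Order.TTheory GRing.Theory Num.Theory.
Local Open Scope ring_scope.

Section Helpers.
Variable R : realType.

Lemma sorted_le_nth (s : seq R) i j : sorted <=%R s ->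
  (i <= j)%N -> (j < size s)%N -> s`_i <= s`_j.
Proof.
move=> ss ij js.
apply: (sorted_leq_nth le_trans (@lexx _ R) 0 ss) => //.
by rewrite inE (leq_ltn_trans ij js).
Qed.

Lemma pick_idx (s : seq R) (y : R) : sorted <=%R s -> s`_0 <= y ->
  has (fun t => y <= t) (behead s) ->
  let p := (find (fun t => y <= t) (behead s)).+1 in
  [/\ (1 <= p <= (size s).-1)%N, s`_(p.-1) <= y, y <= s`_p &
      forall z, z \in s -> z < s`_p -> z <= s`_(p.-1)].
Proof.
move=> ss s0 hs p; rewrite /p /=.
set k := find _ _.
have kl : (k < (size s).-1)%N by rewrite -size_behead -has_find.
have yk : y <= s`_k.+1 by rewrite -nth_behead; exact: (nth_find 0 hs).
split => //.
- case Ek: k => [|k']; first by [].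
  have : (k' < k)%N by rewrite Ek.
  move/(before_find 0); rewrite nth_behead -Ek => /negbT.
  by rewrite -ltNge => /ltW.
- move=> z zs zlt.
  have ms : (index z s < size s)%N by rewrite index_mem.
  rewrite -(nth_index 0 zs) in zlt *.
  case: (leqP (index z s) k) => h.
    apply: sorted_le_nth => //.
    by apply: leq_trans kl _; rewrite leq_pred.
  have := @sorted_le_nth _ _ _ ss h ms.
  by rewrite leNgt zlt.
Qed.

End Helpers.

Theorem theorem4p2 (R : realType) (n : nat) (A : 'M[R]_n) (b : 'rV[R]_n)
  (lam : R) :
  (0 < n)%N ->
  (forall i j, 0 <= A i j <= 1) ->
  (forall i, 0 < b 0 i) ->
  (forall j, alpha_check A b j <= 1) ->
  0 <= lam ->
  (forall p : 'I_n -> nat, inP A b p ->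
     ~ exists x : 'rV[R]_n, solves_system A b lam p x) ->
  forall x : 'rV[R]_n, ~ in_Vstar A b lam x.
Proof.
move=> n0 hA hb hal hlam hno x [hx [hsys _]].
have xal : forall j, alpha_check A b j <= x 0 j.
  move=> j; rewrite /alpha_check.
  apply: (big_ind (fun y => y <= x 0 j)).
  - by case/andP: (hx j).
  - by move=> u v hu hv; rewrite ge_max hu hv.
  move=> i _.
  rewrite lerBlDr.
  apply: le_trans (proj1 (hsys i)) _.
  rewrite /maxmin (bigD1 j) //=.
  apply: lerD; first by rewrite ge_min lexx orbT.
  apply: ler_sum => k _; by rewrite ge_min lexx.
have Dsort : forall j, sorted <=%R (Dseq A b j).
  by move=> j; apply: sort_sorted; exact: le_total.
have Dmem : forall j y, y \in Dseq A b j ->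
    alpha_check A b j <= y <= 1.
  move=> j y; rewrite mem_sort mem_undup !inE.
  case/orP => [/eqP->|]; first by rewrite lexx hal.
  case/orP => [/eqP->|]; first by rewrite hal lexx.
  case/mapP => i; rewrite mem_filter => /andP [hi _] ->.
  by rewrite hi; case/andP: (hA i j).
have Dal : forall j, alpha_check A b j \in Dseq A b j.
  by move=> j; rewrite mem_sort mem_undup inE eqxx.
have D1 : forall j, (1 : R) \in Dseq A b j.
  by move=> j; rewrite mem_sort mem_undup !inE eqxx orbT.
have DA : forall i j, alpha_check A b j <= A i j -> A i j \in Dseq A b j.
  move=> i j h; rewrite mem_sort mem_undup !inE; apply/orP; right; apply/orP; right.
  by apply: map_f; rewrite mem_filter h mem_enum.
have D0 : forall j, dd A b 0 j = alpha_check A b j.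
  move=> j; rewrite /dd.
  have sz : (0 < size (Dseq A b j))%N by move: (Dal j); case: (Dseq A b j).
  apply/le_anti/andP; split.
    rewrite -[X in _ <= X](nth_index 0 (Dal j)).
    by apply: sorted_le_nth => //; rewrite index_mem.
  by case/andP: (Dmem j _ (mem_nth 0 sz)).
pose p := fun j => if Nstar A b j then 0%N
  else (find (fun t => x 0 j <= t) (behead (Dseq A b j))).+1.
have hasj : forall j, ~~ Nstar A b j ->
    has (fun t => x 0 j <= t) (behead (Dseq A b j)).
  move=> j nj; apply/hasP; exists 1; last by case/andP: (hx j).
  move: (D1 j) (D0 j); rewrite /dd; case: (Dseq A b j) => [|h t] //=.
  rewrite inE => /orP [/eqP <-|//] h1.
  by move: nj; rewrite /Nstar -h1 eqxx.
have pj : forall j, ~~ Nstar A b j ->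
  [/\ (1 <= p j <= ll A b j)%N, dd A b (p j).-1 j <= x 0 j, x 0 j <= dd A b (p j) j &
      forall z, z \in Dseq A b j -> z < dd A b (p j) j -> z <= dd A b (p j).-1 j].
  move=> j nj; rewrite /p (negbTE nj).
  apply: pick_idx => //; last exact: hasj.
  by move: (D0 j); rewrite /dd => ->; exact: xal.
have Nx : forall j, Nstar A b j -> x 0 j = 1.
  move=> j; rewrite /Nstar => /eqP h.
  apply/le_anti; case/andP: (hx j) => _ ->; rewrite -h; exact: xal.
have lhsE : forall i, lhs A b p x i = maxmin A x i.
  move=> i; rewrite /lhs /maxmin [RHS](bigID (fun j => Nstar A b j)) /=.
  congr (_ + _); apply: eq_bigr => j hj.
    rewrite Nx // min_l //; by case/andP: (hA i j).
  have [_ h1 h2 h3] := pj j hj.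
  rewrite /gamma; case: ifP => hg.
    by rewrite mul1r subrr mul0r addr0 min_r // (le_trans h2 hg).
  rewrite mul0r subr0 mul1r add0r min_l //.
  have hlt : A i j < dd A b (p j) j by rewrite ltNge hg.
  case: (leP (alpha_check A b j) (A i j)) => ha.
    exact: (le_trans (h3 _ (DA _ _ ha) hlt) h1).
  exact: (ltW (lt_le_trans ha (xal j))).
apply: (hno p).
  move=> j; case: ifP => hj; first by rewrite /p hj.
  by have [] := pj j (negbT hj).
exists x; split => //; split.
  by move=> j hj; rewrite Nx // D0; move: hj; rewrite /Nstar => /eqP ->.
split.
  by move=> j hj; have [_ h1 h2 _] := pj j hj; rewrite h1 h2.
split => i; rewrite lhsE; apply (hsys i).
Qed.
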